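(* Let $\mu\ge 1$, $x\ge 0$, $y>0$. Then $\dfrac{\partial^2 Q_{\mu}(x,y)}{\partial y^2}>0$ if $y>x+\mu-1$, and $\dfrac{\partial^2 Q_{\mu}(x,y)}{\partial y^2}<0$ if $y<x+\mu-2$. If moreover $\mu\ge 3/2$, then $\dfrac{\partial^2 Q_{\mu}(x,y)}{\partial y^2}<0$ whenever $y<x+\mu-3/2$.
   Context: For real $\mu$, $x>0$, $y\ge 0$, the generalized Marcum $Q$-function is $Q_{\mu}(x,y)=x^{\frac12(1-\mu)}\int_y^{\infty} t^{\frac12(\mu-1)}e^{-t-x}I_{\mu-1}(2\sqrt{xt})\,dt$, where $I_\nu$ is the modified Bessel function of the first kind; at $x=0$ it is defined by continuity, $Q_\mu(0,y)=\Gamma(\mu,y)/\Gamma(\mu)$. *)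

(* Defs.v *)
From Stdlib Require Import Reals Factorial.
From Coquelicot Require Import Coquelicot.
Open Scope R_scope.

Definition Gamma (s : R) : R :=
  RInt_gen (fun t => Rpower t (s - 1) * exp (- t)) (at_point 0) (Rbar_locally p_infty).

Definition upper_Gamma (s y : R) : R :=
  RInt_gen (fun t => Rpower t (s - 1) * exp (- t)) (at_point y) (Rbar_locally p_infty).

Definition besselI (nu z : R) : R :=
  Series (fun k : nat =>
    (z / 2) ^ (2 * k) * Rpower (z / 2) nu / (INR (fact k) * Gamma (INR k + nu + 1))).

Definition marcumQ (mu x y : R) : R :=
  if Req_EM_T x 0 then upper_Gamma mu y / Gamma mu
  else Rpower x ((1 - mu) / 2) *
       RInt_gen (fun t => Rpower t ((mu - 1) / 2) * exp (- t - x)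
                            * besselI (mu - 1) (2 * sqrt (x * t)))
                (at_point y) (Rbar_locally p_infty).

Definition d2Q_dy2 (mu x y d2 : R) : Prop :=
  exists Q1 : R -> R,
    (forall t, 0 < t -> is_derive (fun s => marcumQ mu x s) t (Q1 t)) /\
    is_derive Q1 y d2.

(* Main.v *)
Require Import Defs.
From Stdlib Require Import Reals Lra Lia Psatz Factorial.
From Coquelicot Require Import Coquelicot.
Open Scope R_scope.

Lemma Rpower_1_base : forall a, Rpower 1 a = 1.
Proof. intros a; unfold Rpower; rewrite ln_1, Rmult_0_r; apply exp_0. Qed.

Lemma Rpower_pos : forall t a, 0 < Rpower t a.
Proof. intros; unfold Rpower; apply exp_pos. Qed.

Lemma Rpower_le1 : forall t a, 0 < t <= 1 -> 0 <= a -> Rpower t a <= 1.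
Proof.
  intros t a Ht Ha. rewrite <- (Rpower_1_base a). apply Rle_Rpower_l; lra.
Qed.

Lemma ln_le_id : forall y, 0 < y -> ln y <= y.
Proof.
  intros y Hy. assert (H := exp_ineq1_le (y - 1)).
  destruct (Rle_or_lt (ln y) (y-1)) as [h|h]; [lra|].
  exfalso. apply exp_increasing in h. rewrite (exp_ln y Hy) in h. lra.
Qed.

Lemma exp_mono : forall x y, x <= y -> exp x <= exp y.
Proof. intros x y H. destruct (Rle_lt_or_eq_dec _ _ H) as [h|h]; [left; apply exp_increasing; exact h| rewrite h; lra]. Qed.

Lemma Rpower_exp_bound : forall a k, 0 <= a -> 0 < k ->
  exists C, 0 < C /\ forall t, 0 < t -> Rpower t a <= C * exp (k * t).
Proof.
  intros a k Ha Hk. destruct (Req_dec a 0) as [Ha0|Ha0].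
  - exists 1. split; [lra|]. intros t Ht. subst a. rewrite Rpower_O by lra.
    rewrite Rmult_1_l. assert (H := exp_ineq1_le (k*t)). nra.
  - exists (exp (a * (ln a - ln k))). split; [apply exp_pos|]. intros t Ht.
    unfold Rpower. rewrite <- exp_plus. apply exp_mono.
    assert (Hak : 0 < a) by lra.
    assert (H : ln (k * t / a) <= k * t / a) by (apply ln_le_id; apply Rdiv_lt_0_compat; nra).
    unfold Rdiv in H. rewrite ln_mult in H by (try apply Rinv_0_lt_compat; nra).
    rewrite ln_mult in H by lra. rewrite ln_Rinv in H by lra.
    assert (a * (ln k + ln t + - ln a) <= a * (k * t * / a)) by (apply Rmult_le_compat_l; lra).
    replace (a * (k * t * / a)) with (k*t) in H0 by (field; lra). nra.
Qed.
Lemma mono_lim : forall (F : R -> R) a K,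
  (forall b1 b2, a <= b1 -> b1 <= b2 -> F b1 <= F b2) ->
  (forall b, a <= b -> F b <= K) ->
  exists l, filterlim F (Rbar_locally p_infty) (locally l) /\ forall b, a <= b -> F b <= l.
Proof.
  intros F a K Hm HK.
  set (E := fun r => exists b, a <= b /\ r = F b).
  assert (Hbd : bound E) by (exists K; intros r [b [Hb ->]]; auto).
  assert (He : exists r, E r) by (exists (F a); exists a; split; [lra|auto]).
  destruct (completeness E Hbd He) as [l [Hub Hlub]].
  exists l. split.
  - apply filterlim_locally. intros eps.
    assert (exists b0, a <= b0 /\ l - eps < F b0) as [b0 [Hb0 Hlt]].
    { apply Classical_Pred_Type.not_all_not_ex. intros Hn.
      assert (l <= l - eps).
      { apply Hlub. intros r [b [Hb' ->]]. specialize (Hn b).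
        apply Rnot_lt_le. intros Hc. apply Hn. split; auto. }
      destruct eps; simpl in *; lra. }
    exists b0. intros b Hb1. assert (F b0 <= F b) by (apply Hm; lra).
    assert (F b <= l) by (apply Hub; exists b; split; [lra|auto]).
    change (Rabs (F b - l) < eps). apply Rabs_def1; lra.
  - intros b Hb. apply Hub. exists b; auto.
Qed.

Lemma is_RInt_gen_from_lim : forall (f : R -> R) a l,
  (forall b, a <= b -> ex_RInt f a b) ->
  filterlim (fun b => RInt f a b) (Rbar_locally p_infty) (locally l) ->
  is_RInt_gen f (at_point a) (Rbar_locally p_infty) l.
Proof.
  intros f a l Hex Hlim.
  unfold is_RInt_gen. apply filterlimi_locally. intros eps.
  apply filterlim_locally with (eps := eps) in Hlim.
  destruct Hlim as [M HM].
  exists (fun x => x = a) (fun y => Rmax M a < y).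
  - reflexivity.
  - exists (Rmax M a). auto.
  - intros x y -> Hy. exists (RInt f a y). split.
    + apply (RInt_correct (V:=R_CompleteNormedModule)). apply Hex. generalize (Rmax_r M a); lra.
    + apply HM. generalize (Rmax_l M a); lra.
Qed.

Lemma RInt_gen_exists : forall (f : R -> R) a C k, 0 < k -> 0 <= C ->
  (forall b, a <= b -> ex_RInt f a b) ->
  (forall t, a < t -> 0 <= f t <= C * exp (- k * t)) ->
  exists l, filterlim (fun b => RInt f a b) (Rbar_locally p_infty) (locally l) /\
    is_RInt_gen f (at_point a) (Rbar_locally p_infty) l /\
    (forall b, a <= b -> RInt f a b <= l).
Proof.
  intros f a C k Hk HC Hex Hb.
  assert (Hg : forall b, is_RInt (fun t => C * exp (- k * t)) a b
                 (- C / k * exp (- k * b) - (- C / k * exp (- k * a)))).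
  { intros b. apply (is_RInt_derive (fun t => - C / k * exp (- k * t))).
    - intros x _. auto_derive; auto. field. lra.
    - intros x _. apply (ex_derive_continuous (fun t => C * exp (- k * t))). auto_derive. auto. }
  destruct (mono_lim (fun b => RInt f a b) a (C / k * exp (- k * a))) as [l [Hl1 Hl2]].
  - intros b1 b2 H1 H2.
    rewrite <- (RInt_Chasles (V:=R_CompleteNormedModule) f a b1 b2).
    + assert (0 <= RInt f b1 b2).
      { apply RInt_ge_0; auto. apply (ex_RInt_Chasles_2 (V:=R_CompleteNormedModule) f a); [lra|apply Hex; lra].
        intros x Hx. apply Hb. lra. }
      simpl. unfold plus; simpl. lra.
    + apply Hex; lra.
    + apply (ex_RInt_Chasles_2 (V:=R_CompleteNormedModule) f a); [lra|apply Hex; lra].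
  - intros b Hab.
    apply Rle_trans with (RInt (fun t => C * exp (- k * t)) a b).
    + apply RInt_le; auto. eexists; apply Hg. intros x Hx. apply Hb; lra.
    + rewrite (is_RInt_unique _ _ _ _ (Hg b)).
      assert (0 <= C / k * exp (- k * b)).
      { apply Rmult_le_pos; [apply Rdiv_le_0_compat; lra| left; apply exp_pos]. }
      unfold Rdiv in *. lra.
  - exists l. split; auto. split; auto. apply is_RInt_gen_from_lim; auto.
Qed.

Lemma Rpower_derive : forall a t, 0 < t -> is_derive (fun u => Rpower u a) t (a * Rpower t (a - 1)).
Proof. intros a t Ht. apply is_derive_Reals. apply derivable_pt_lim_power; auto. Qed.

Lemma Rpower_cont : forall a t, 0 < t -> continuous (fun u => Rpower u a) t.
Proof. intros a t Ht. apply (ex_derive_continuous (K:=R_AbsRing) (V:=R_NormedModule)). eexists. apply Rpower_derive; auto. Qed.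

Definition pw (a t : R) : R := if Rlt_dec 0 t then Rpower t a else 0.

Lemma pw_cont : forall a z, 0 < a -> continuous (pw a) z.
Proof.
  intros a z Ha. destruct (Rlt_dec 0 z) as [Hz|Hz].
  - apply continuous_ext_loc with (fun u => Rpower u a); [|apply Rpower_cont; auto].
    apply locally_interval with 0 p_infty; simpl; auto.
    intros y Hy _. unfold pw. destruct (Rlt_dec 0 y); tauto.
  - destruct (Rlt_dec z 0) as [Hz'|Hz'].
    + apply continuous_ext_loc with (fun _ => 0); [|apply continuous_const].
      apply locally_interval with m_infty 0; simpl; auto.
      intros y _ Hy. unfold pw. destruct (Rlt_dec 0 y); [lra|auto].
    + assert (z = 0) by lra. subst z.
      apply filterlim_locally. intros eps.
      exists (mkposreal (Rpower eps (/ a)) (Rpower_pos _ _)). intros y Hy.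
      change (Rabs (pw a y - pw a 0) < eps). unfold pw at 2.
      destruct (Rlt_dec 0 0); [lra|]. unfold pw.
      change (Rabs (y - 0) < Rpower eps (/ a)) in Hy.
      destruct (Rlt_dec 0 y) as [Hy0|Hy0].
      * rewrite Rminus_0_r, Rabs_pos_eq by (left; apply Rpower_pos).
        rewrite Rminus_0_r, Rabs_pos_eq in Hy by lra.
        apply Rlt_le_trans with (Rpower (Rpower eps (/ a)) a).
        -- apply Rlt_Rpower_l; auto.
        -- rewrite Rpower_mult. rewrite Rinv_l by lra. rewrite Rpower_1; [lra|apply cond_pos].
      * rewrite Rminus_0_r, Rabs_R0. apply cond_pos.
Qed.

Definition ga (a t : R) : R := Rpower t a * exp (- t).

Lemma ga_exRInt : forall a b, 0 <= a -> 0 <= b -> ex_RInt (ga a) 0 b.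
Proof.
  intros a b Ha Hb.
  destruct (Req_dec a 0) as [H0|H0].
  - subst a. apply (ex_RInt_ext (fun t => exp (- t))).
    + intros x Hx. rewrite Rmin_left in Hx by lra. unfold ga. rewrite (Rpower_O x) by lra. rewrite Rmult_1_l. reflexivity.
    + apply (ex_RInt_continuous (V:=R_CompleteNormedModule)). intros z _. apply (ex_derive_continuous (fun t => exp (- t))). auto_derive; auto.
  - apply (ex_RInt_ext (fun t => pw a t * exp (- t))).
    + intros x Hx. rewrite Rmin_left in Hx by lra. unfold ga, pw. destruct (Rlt_dec 0 x); [reflexivity|lra].
    + apply (ex_RInt_continuous (V:=R_CompleteNormedModule)). intros z _. apply (continuous_mult (K:=R_AbsRing)).
      * apply pw_cont; lra.
      * apply (ex_derive_continuous (fun t => exp (- t))). auto_derive; auto.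
Qed.

Lemma ga_bound : forall a, 0 <= a -> exists C, 0 < C /\ forall t, 0 < t -> 0 <= ga a t <= C * exp (- (1/2) * t).
Proof.
  intros a Ha. destruct (Rpower_exp_bound a (1/2) Ha) as [C [HC HB]]; [lra|].
  exists C. split; auto. intros t Ht. unfold ga. split.
  - apply Rmult_le_pos; left; [apply Rpower_pos|apply exp_pos].
  - replace (C * exp (- (1/2) * t)) with (C * exp (1/2 * t) * exp (- t)).
    + apply Rmult_le_compat_r; [left; apply exp_pos|]. apply HB; auto.
    + rewrite Rmult_assoc, <- exp_plus. replace (1 / 2 * t + - t) with (- (1 / 2) * t) by lra. reflexivity.
Qed.

Lemma Gamma_spec : forall s, 1 <= s ->
  exists l, filterlim (fun b => RInt (ga (s - 1)) 0 b) (Rbar_locally p_infty) (locally l) /\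
    Gamma s = l /\ (forall b, 0 <= b -> RInt (ga (s-1)) 0 b <= l).
Proof.
  intros s Hs. destruct (ga_bound (s - 1)) as [C [HC HB]]; [lra|].
  destruct (RInt_gen_exists (ga (s-1)) 0 C (1/2)) as [l [H1 [H2 H3]]]; try lra.
  - intros b Hb. apply ga_exRInt; lra.
  - intros t Ht. replace (- (1/2) * t) with (- (1/2) * t) by ring. apply HB; auto.
  - exists l. split; auto. split; auto. unfold Gamma.
    apply is_RInt_gen_unique. exact H2.
Qed.


Ltac rring := match goal with |- @eq _ ?a ?b => change (@eq R a b) end; ring.
Ltac rfield := match goal with |- @eq _ ?a ?b => change (@eq R a b) end; field.

Lemma dmul : forall (f g : R -> R) x df dg, is_derive f x df -> is_derive g x dg ->
  is_derive (fun t => f t * g t) x (df * g x + f x * dg).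
Proof. intros. apply (is_derive_mult (K:=R_AbsRing) f g); auto. intros; apply Rmult_comm. Qed.

Lemma dext : forall (f : R -> R) x l l', is_derive f x l -> l = l' -> is_derive f x l'.
Proof. intros; subst; auto. Qed.

Lemma dexpm : forall x, is_derive (fun t => exp (- t)) x (- exp (- x)).
Proof. intros x. apply (dext _ _ (exp (-x) * (-1))). auto_derive; auto; rring. rring. Qed.

Lemma small_zero : forall D K d, 0 < d -> 0 < K ->
  (forall e, 0 < e < d -> Rabs D <= K * e) -> D = 0.
Proof.
  intros D K d Hd HK H. destruct (Req_dec D 0) as [h|h]; auto. exfalso.
  assert (HD : 0 < Rabs D) by (apply Rabs_pos_lt; auto).
  set (e := Rmin (d/2) (Rabs D / (2*K))).
  assert (He1 : 0 < e) by (apply Rmin_pos; apply Rdiv_lt_0_compat; lra).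
  assert (He2 : e <= d/2) by apply Rmin_l.
  assert (He3 : e <= Rabs D / (2*K)) by apply Rmin_r.
  specialize (H e ltac:(lra)).
  assert (K * e <= K * (Rabs D / (2 * K))) by (apply Rmult_le_compat_l; lra).
  replace (K * (Rabs D / (2 * K))) with (Rabs D / 2) in H0 by (field; lra). lra.
Qed.

Lemma ga_small : forall a e, 0 <= a -> 0 < e <= 1 -> 0 <= RInt (ga a) 0 e <= e.
Proof.
  intros a e Ha He. split.
  - apply RInt_ge_0; [lra|apply ga_exRInt; lra|]. intros x Hx. unfold ga.
    apply Rmult_le_pos; left; [apply Rpower_pos|apply exp_pos].
  - apply Rle_trans with (RInt (fun _ => 1) 0 e).
    + apply RInt_le; [lra|apply ga_exRInt; lra|apply ex_RInt_const|].
      intros x Hx. unfold ga. rewrite <- (Rmult_1_l 1).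
      apply Rmult_le_compat; try (left; apply Rpower_pos); try (left; apply exp_pos).
      * apply Rpower_le1; lra.
      * rewrite <- exp_0. apply exp_mono. lra.
    + rewrite RInt_const. simpl. unfold scal; simpl. unfold mult; simpl. lra.
Qed.

Lemma ga_cont : forall a t, 0 < t -> continuous (ga a) t.
Proof.
  intros a t Ht. apply (continuous_mult (K:=R_AbsRing)).
  - apply Rpower_cont; auto.
  - apply (ex_derive_continuous (fun t => exp (- t))). auto_derive; auto.
Qed.

Lemma ga_recur_finite : forall s b, 1 <= s -> 0 < b ->
  RInt (ga s) 0 b = s * RInt (ga (s-1)) 0 b - Rpower b s * exp (- b).
Proof.
  intros s b Hs Hb.
  set (D := RInt (ga s) 0 b - s * RInt (ga (s-1)) 0 b + Rpower b s * exp (- b)).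
  enough (D = 0) by (unfold D in H; lra).
  apply (small_zero D (s + 2) (Rmin 1 b)); [apply Rmin_pos; lra|lra|].
  intros e He. assert (He1 : e <= 1) by (generalize (Rmin_l 1 b); lra).
  assert (He2 : e <= b) by (generalize (Rmin_r 1 b); lra).
  assert (HC : forall a, 0 <= a -> RInt (ga a) 0 b = RInt (ga a) 0 e + RInt (ga a) e b).
  { intros a Ha. rewrite <- (RInt_Chasles (V:=R_CompleteNormedModule) (ga a) 0 e b).
    - reflexivity.
    - apply ga_exRInt; lra.
    - apply (ex_RInt_Chasles_2 (V:=R_CompleteNormedModule) (ga a) 0); [lra|apply ga_exRInt; lra]. }
  assert (HI : is_RInt (fun t => ga s t - s * ga (s-1) t) e b
     ((- Rpower b s * exp (- b)) - (- Rpower e s * exp (- e)))).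
  { apply (is_RInt_derive (fun t => - Rpower t s * exp (- t))).
    - intros x Hx. rewrite Rmin_left in Hx by lra.
      eapply dext.
      + apply dmul; [|apply dexpm].
        apply (is_derive_opp (K:=R_AbsRing) (V:=R_NormedModule) (fun t => Rpower t s)). apply Rpower_derive. lra.
      + unfold ga. simpl. unfold opp; simpl. ring.
    - intros x Hx. rewrite Rmin_left in Hx by lra.
      apply (continuous_minus (K:=R_AbsRing) (V:=R_NormedModule)).
      + apply ga_cont; lra.
      + apply (continuous_scal_r (K:=R_AbsRing) (V:=R_NormedModule) s). apply ga_cont; lra. }
  assert (HI2 : RInt (ga s) e b - s * RInt (ga (s-1)) e b
          = - Rpower b s * exp (- b) + Rpower e s * exp (- e)).
  { assert (ex1 : ex_RInt (ga s) e b) by (apply (ex_RInt_Chasles_2 (V:=R_CompleteNormedModule) (ga s) 0); [lra|apply ga_exRInt; lra]).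
    assert (ex2 : ex_RInt (ga (s-1)) e b) by (apply (ex_RInt_Chasles_2 (V:=R_CompleteNormedModule) (ga (s-1)) 0); [lra|apply ga_exRInt; lra]).
    assert (H1 := RInt_correct _ _ _ ex1). assert (H2 := RInt_correct _ _ _ ex2).
    assert (H3 := is_RInt_minus _ _ _ _ _ _ H1 (is_RInt_scal _ _ _ s _ H2)).
    assert (H4 := is_RInt_unique _ _ _ _ H3). assert (H5 := is_RInt_unique _ _ _ _ HI).
    simpl in H4, H5. unfold minus, plus, opp, scal, mult in H4; simpl in H4.
    unfold mult in H4; simpl in H4. assert (E : RInt (fun t : R => ga s t - s * ga (s - 1) t) e b = RInt (ga s) e b + - (s * RInt (ga (s - 1)) e b)) by exact H4. lra. }
  assert (D = RInt (ga s) 0 e - s * RInt (ga (s-1)) 0 e + Rpower e s * exp (- e)).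
  { unfold D. rewrite (HC s), (HC (s-1)) by lra. lra. }
  rewrite H.
  destruct (ga_small s e) as [h1 h2]; try lra.
  destruct (ga_small (s-1) e) as [h3 h4]; try lra.
  assert (h5 : 0 <= Rpower e s * exp (- e) <= e).
  { split. apply Rmult_le_pos; left; [apply Rpower_pos|apply exp_pos].
    replace s with (1 + (s-1)) by ring. rewrite Rpower_plus, Rpower_1 by lra.
    assert (Rpower e (s-1) <= 1) by (apply Rpower_le1; lra).
    assert (exp (- e) <= 1) by (rewrite <- exp_0; apply exp_mono; lra).
    assert (0 < Rpower e (s-1)) by apply Rpower_pos. assert (0 < exp (-e)) by apply exp_pos.
    assert (Rpower e (s-1) * exp (-e) <= 1) by (apply Rle_trans with (1*1); [apply Rmult_le_compat; lra|lra]).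
    assert (e * (Rpower e (s-1) * exp (-e)) <= e * 1) by (apply Rmult_le_compat_l; lra).
    rewrite Rmult_assoc. lra. }
  assert (s * RInt (ga (s - 1)) 0 e <= s * e) by (apply Rmult_le_compat_l; lra).
  assert (0 <= s * RInt (ga (s - 1)) 0 e) by (apply Rmult_le_pos; lra).
  apply Rabs_le. split; lra.
Qed.

Lemma lim_exp_bound : forall (g : R -> R) C k, 0 < k -> 0 < C ->
  (forall b, 0 < b -> 0 <= g b <= C * exp (- k * b)) ->
  filterlim g (Rbar_locally p_infty) (locally 0).
Proof.
  intros g C k Hk HC Hg. apply filterlim_locally. intros eps.
  exists (Rmax 0 (- ln (eps / C) / k)). intros b Hb.
  assert (Hb0 : 0 < b) by (generalize (Rmax_l 0 (- ln (eps / C) / k)); lra).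
  assert (Hb1 : - ln (eps / C) / k < b) by (generalize (Rmax_r 0 (- ln (eps / C) / k)); lra).
  change (Rabs (g b - 0) < eps). rewrite Rminus_0_r.
  destruct (Hg b Hb0) as [h1 h2]. rewrite Rabs_pos_eq by lra.
  assert (Hep : 0 < eps / C) by (apply Rdiv_lt_0_compat; [apply cond_pos|lra]).
  assert (exp (- k * b) < eps / C).
  { rewrite <- (exp_ln (eps / C)) by lra. apply exp_increasing.
    assert (- ln (eps / C) < k * b).
    { apply Rmult_lt_compat_l with (r := k) in Hb1; auto.
      replace (k * (- ln (eps / C) / k)) with (- ln (eps / C)) in Hb1 by (field; lra). lra. }
    lra. }
  assert (C * exp (- k * b) < C * (eps / C)) by (apply Rmult_lt_compat_l; lra).
  replace (C * (eps / C)) with (pos eps) in H0 by (field; lra). lra.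
Qed.

Lemma Gamma_rec : forall s, 1 <= s -> Gamma (s + 1) = s * Gamma s.
Proof.
  intros s Hs.
  destruct (Gamma_spec (s+1)) as [l1 [H1 [H1' _]]]; [lra|].
  destruct (Gamma_spec s) as [l0 [H0 [H0' _]]]; [lra|].
  rewrite H1', H0'.
  replace (s + 1 - 1) with s in H1 by ring.
  destruct (Rpower_exp_bound s (1/2)) as [C [HC HB]]; [lra|lra|].
  assert (HG : is_lim (fun b => Rpower b s * exp (- b)) p_infty 0).
  { apply (lim_exp_bound _ C (1/2)); [lra|lra|]. intros b Hb. split.
    - apply Rmult_le_pos; left; [apply Rpower_pos|apply exp_pos].
    - replace (C * exp (- (1/2) * b)) with (C * exp (1/2 * b) * exp (- b)).
      + apply Rmult_le_compat_r; [left; apply exp_pos|]. apply HB; auto.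
      + rewrite Rmult_assoc, <- exp_plus. replace (1 / 2 * b + - b) with (- (1 / 2) * b) by lra. reflexivity. }
  assert (HL : is_lim (fun b => s * RInt (ga (s-1)) 0 b - Rpower b s * exp (- b)) p_infty (s * l0 - 0)).
  { apply is_lim_minus'; auto. apply (is_lim_scal_l _ s p_infty l0). exact H0. }
  assert (HL' : is_lim (fun b => RInt (ga s) 0 b) p_infty (s * l0 - 0)).
  { apply is_lim_ext_loc with (2 := HL). exists 0. intros b Hb.
    symmetry. apply ga_recur_finite; lra. }
  assert (E := filterlim_locally_unique _ _ _ H1 HL'). rewrite E. ring.
Qed.

Lemma Gamma_pos : forall s, 1 <= s -> 0 < Gamma s.
Proof.
  intros s Hs. destruct (Gamma_spec s) as [l [_ [E Hl]]]; auto. rewrite E.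
  apply Rlt_le_trans with (RInt (ga (s-1)) 0 2); [|apply Hl; lra].
  rewrite <- (RInt_Chasles (V:=R_CompleteNormedModule) (ga (s-1)) 0 1 2).
  - assert (0 <= RInt (ga (s-1)) 0 1) by (apply ga_small; lra).
    assert (exp (-2) <= RInt (ga (s-1)) 1 2).
    { apply Rle_trans with (RInt (fun _ => exp (-2)) 1 2).
      - rewrite RInt_const. simpl. unfold scal; simpl. unfold mult; simpl. lra.
      - apply RInt_le; [lra|apply ex_RInt_const|
          apply (ex_RInt_Chasles_2 (V:=R_CompleteNormedModule) (ga (s-1)) 0); [lra|apply ga_exRInt; lra]|].
        intros x Hx. unfold ga. apply Rle_trans with (1 * exp (-2)); [lra|].
        apply Rmult_le_compat; try lra; try (left; apply exp_pos).
        + apply Rle_trans with (Rpower x 0); [rewrite Rpower_O by lra; lra|apply Rle_Rpower; lra].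
        + apply exp_mono; lra. }
    assert (0 < exp (-2)) by apply exp_pos. simpl. unfold plus; simpl. lra.
  - apply (ex_RInt_Chasles_1 (V:=R_CompleteNormedModule) (ga (s-1)) 0 1 2); [lra|apply ga_exRInt; lra].
  - apply (ex_RInt_Chasles_2 (V:=R_CompleteNormedModule) (ga (s-1)) 0); [lra|apply ga_exRInt; lra].
Qed.

Lemma lim_inv_n1 : is_lim_seq (fun n => / (INR n + 1)) 0.
Proof.
  assert (H : is_lim_seq (fun n => INR n + 1) p_infty).
  { apply is_lim_seq_le_p_loc with INR; [|apply is_lim_seq_INR].
    exists O. intros n _. lra. }
  apply (is_lim_seq_inv _ _ H). discriminate.
Qed.

Lemma radius_inf : forall a : nat -> R, (forall n, 0 < a n) ->
  (forall n, a (S n) <= a n / (INR n + 1)) -> CV_radius a = p_infty.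
Proof.
  intros a Hp Hr. apply CV_radius_infinite_DAlembert.
  - intros n. specialize (Hp n). lra.
  - apply is_lim_seq_le_le with (fun _ => 0) (fun n => / (INR n + 1)).
    + intros n. assert (Hs := Hp (S n)). specialize (Hp n).
      rewrite Rabs_pos_eq by (apply Rmult_le_pos; [lra|left; apply Rinv_0_lt_compat; auto]).
      split; [apply Rmult_le_pos; [lra|left; apply Rinv_0_lt_compat; auto]|].
      assert (0 < INR n + 1) by (generalize (pos_INR n); lra).
      apply (Rmult_le_reg_r (a n)); auto. unfold Rdiv in *.
      rewrite Rmult_assoc, Rinv_l by lra. rewrite Rmult_1_r.
      specialize (Hr n). lra.
    + apply is_lim_seq_const.
    + apply lim_inv_n1.
Qed.

Definition cf (nu : R) (k : nat) : R := / (INR (fact k) * Gamma (INR k + nu + 1)).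

Lemma Gk_pos : forall nu k, 0 <= nu -> 0 < Gamma (INR k + nu + 1).
Proof. intros. apply Gamma_pos. generalize (pos_INR k). lra. Qed.

Lemma fact_pos' : forall k, 0 < INR (fact k).
Proof. intros. apply lt_0_INR. apply lt_O_fact. Qed.

Lemma cf_pos : forall nu k, 0 <= nu -> 0 < cf nu k.
Proof.
  intros. unfold cf. apply Rinv_0_lt_compat. apply Rmult_lt_0_compat; [apply fact_pos'|apply Gk_pos; auto].
Qed.

Lemma cf_rec : forall nu k, 0 <= nu ->
  cf nu (S k) * ((INR k + 1) * (INR k + nu + 1)) = cf nu k.
Proof.
  intros nu k Hnu. unfold cf.
  replace (INR (S k) + nu + 1) with ((INR k + nu + 1) + 1) by (rewrite S_INR; ring).
  rewrite Gamma_rec by (generalize (pos_INR k); lra).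
  rewrite fact_simpl, mult_INR, S_INR.
  assert (H1 := fact_pos' k). assert (H2 := Gk_pos nu k Hnu).
  assert (0 <= INR k) by apply pos_INR.
  field. repeat split; lra.
Qed.

Lemma cf_radius : forall nu, 0 <= nu -> CV_radius (cf nu) = p_infty.
Proof.
  intros nu Hnu. apply radius_inf.
  - intros; apply cf_pos; auto.
  - intros n. rewrite <- (cf_rec nu n Hnu).
    assert (H0 := cf_pos nu (S n) Hnu). assert (0 <= INR n) by apply pos_INR.
    unfold Rdiv. rewrite Rmult_assoc.
    replace ((INR n + 1) * (INR n + nu + 1) * / (INR n + 1)) with (INR n + nu + 1) by (field; lra).
    rewrite <- (Rmult_1_r (cf nu (S n))) at 1. apply Rmult_le_compat_l; lra.
Qed.

Lemma cf_le : forall nu k, 0 <= nu -> cf nu k <= cf nu 0 / (INR (fact k) ^ 2).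
Proof.
  intros nu k Hnu. induction k.
  - simpl. replace (1 * (1 * 1)) with 1 by ring. unfold Rdiv. rewrite Rinv_1, Rmult_1_r. lra.
  - rewrite <- (cf_rec nu k Hnu) in IHk.
    rewrite fact_simpl, mult_INR, S_INR.
    assert (H1 := fact_pos' k). assert (H0 := cf_pos nu (S k) Hnu). assert (H2 := cf_pos nu 0 Hnu).
    assert (0 <= INR k) by apply pos_INR.
    assert (Hq : cf nu (S k) * (INR k + 1) ^ 2 <= cf nu 0 / INR (fact k) ^ 2).
    { apply Rle_trans with (2 := IHk). apply Rmult_le_compat_l; nra. }
    apply (Rmult_le_reg_r ((INR k + 1)^2)); [nra|].
    replace (cf nu 0 / ((INR k + 1) * INR (fact k)) ^ 2 * (INR k + 1) ^ 2) with (cf nu 0 / INR (fact k) ^ 2)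
      by (field; lra). exact Hq.
Qed.

Lemma PSeries_nonneg : forall (b : nat -> R) u, (forall n, 0 <= b n) -> 0 <= u ->
  ex_pseries b u -> 0 <= PSeries b u.
Proof.
  intros b u Hb Hu Hex. rewrite <- (PSeries_const_0 u). unfold PSeries.
  apply Series_le.
  - intros n. split; [rewrite Rmult_0_l; lra|]. rewrite Rmult_0_l.
    apply Rmult_le_pos; auto. apply pow_le; auto.
  - apply ex_pseries_R. auto.
Qed.

Section SS.
Variable nu : R.
Hypothesis Hnu : 0 <= nu.

Definition S0 u := PSeries (cf nu) u.
Definition S1 u := PSeries (PS_derive (cf nu)) u.
Definition S2 u := PSeries (PS_derive (PS_derive (cf nu))) u.

Lemma rad0 : forall u, Rbar_lt (Rabs u) (CV_radius (cf nu)).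
Proof. intros. rewrite cf_radius by auto. simpl. auto. Qed.
Lemma rad1 : forall u, Rbar_lt (Rabs u) (CV_radius (PS_derive (cf nu))).
Proof. intros. rewrite CV_radius_derive. apply rad0. Qed.
Lemma rad2 : forall u, Rbar_lt (Rabs u) (CV_radius (PS_derive (PS_derive (cf nu)))).
Proof. intros. rewrite CV_radius_derive. apply rad1. Qed.

Lemma dS0 : forall u, is_derive S0 u (S1 u).
Proof. intros. apply is_derive_PSeries. apply rad0. Qed.
Lemma dS1 : forall u, is_derive S1 u (S2 u).
Proof. intros. apply is_derive_PSeries. apply rad1. Qed.

Lemma S_ode : forall u, u * S2 u + (nu + 1) * S1 u = S0 u.
Proof.
  intros u. unfold S0, S1, S2.
  rewrite <- PSeries_incr_1, <- PSeries_scal.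
  rewrite <- PSeries_plus.
  - apply PSeries_ext. intros n. unfold PS_plus, PS_scal, PS_incr_1, PS_derive.
    destruct n as [|m].
    + simpl. unfold plus, zero, scal, mult; simpl. unfold mult; simpl.
      rewrite <- (cf_rec nu 0 Hnu). simpl. ring.
    + rewrite <- (cf_rec nu (S m) Hnu). rewrite !S_INR.
      unfold plus, scal, mult; simpl. unfold mult; simpl. rring.
  - apply ex_pseries_incr_1. apply CV_radius_inside. apply rad2.
  - apply ex_pseries_scal. apply Rmult_comm. apply CV_radius_inside. apply rad1.
Qed.

Lemma S0_ge : forall u, 0 <= u -> cf nu 0 <= S0 u.
Proof.
  intros u Hu. unfold S0. rewrite PSeries_decr_1 by (apply CV_radius_inside; apply rad0).
  assert (0 <= PSeries (PS_decr_1 (cf nu)) u).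
  { apply PSeries_nonneg; auto.
    - intros n. unfold PS_decr_1. left. apply cf_pos; auto.
    - apply CV_radius_inside. rewrite CV_radius_decr_1. apply rad0. }
  assert (0 <= u * PSeries (PS_decr_1 (cf nu)) u) by (apply Rmult_le_pos; auto). lra.
Qed.

Lemma S0_pos : forall u, 0 <= u -> 0 < S0 u.
Proof. intros. apply Rlt_le_trans with (cf nu 0); [apply cf_pos; auto|apply S0_ge; auto]. Qed.

Lemma S1_nonneg : forall u, 0 <= u -> 0 <= S1 u.
Proof.
  intros u Hu. apply PSeries_nonneg; auto.
  - intros n. unfold PS_derive. apply Rmult_le_pos; [apply pos_INR|left; apply cf_pos; auto].
  - apply CV_radius_inside. apply rad1.
Qed.

Lemma S0_bound : forall lam, 0 < lam -> exists M, 0 < M /\ forall u, 0 <= u -> S0 u <= M * exp (u / lam).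
Proof.
  intros lam Hlam.
  set (e := fun k : nat => / INR (fact k)).
  assert (He : forall k, 0 < e k) by (intros; apply Rinv_0_lt_compat; apply fact_pos').
  assert (Hrad : CV_radius e = p_infty).
  { apply radius_inf; auto. intros n. unfold e. rewrite fact_simpl, mult_INR, S_INR.
    assert (H1 := fact_pos' n). assert (0 <= INR n) by apply pos_INR.
    right. field. split; lra. }
  assert (Hex : forall x, ex_series (fun k => e k * x ^ k)).
  { intros x. apply ex_pseries_R. apply CV_radius_inside. rewrite Hrad. simpl; auto. }
  destruct (filterlim_bounded (V:=R_NormedModule) (fun k => e k * lam ^ k)) as [B HB].
  { exists 0. apply ex_series_lim_0. apply Hex. }
  assert (HB' : forall k, e k * lam ^ k <= Rmax B 1).
  { intros k. apply Rle_trans with B; [|apply Rmax_l]. specialize (HB k).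
    apply Rle_trans with (2 := HB). apply Rle_abs. }
  assert (HB1 : 0 < Rmax B 1) by (generalize (Rmax_r B 1); lra).
  exists (cf nu 0 * Rmax B 1). split; [apply Rmult_lt_0_compat; auto; apply cf_pos; auto|].
  intros u Hu. rewrite exp_Reals. unfold PSeries. rewrite <- Series_scal_l. unfold S0, PSeries.
  apply Series_le.
  - intros n. split.
    + apply Rmult_le_pos; [left; apply cf_pos; auto|apply pow_le; auto].
    + assert (Hc := cf_le nu n Hnu). assert (Hf := fact_pos' n).
      assert (Hu' : 0 <= u ^ n) by (apply pow_le; auto).
      apply Rle_trans with (cf nu 0 / INR (fact n) ^ 2 * u ^ n); [apply Rmult_le_compat_r; auto|].
      assert (Hl := HB' n). unfold e in Hl.
      assert (Hlp : 0 < lam ^ n) by (apply pow_lt; auto).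
      assert (HA : 0 <= / INR (fact n) * (u / lam) ^ n).
      { apply Rmult_le_pos; [left; apply Rinv_0_lt_compat; auto|apply pow_le].
        apply Rdiv_le_0_compat; lra. }
      replace (cf nu 0 / INR (fact n) ^ 2 * u ^ n) with
        (cf nu 0 * ((/ INR (fact n) * (u / lam) ^ n) * (/ INR (fact n) * lam ^ n))).
      + unfold e. replace (cf nu 0 * Rmax B 1 * (/ INR (fact n) * (u / lam) ^ n)) with
          (cf nu 0 * ((/ INR (fact n) * (u / lam) ^ n) * Rmax B 1)) by ring.
        apply Rmult_le_compat_l; [left; apply cf_pos; auto|].
        apply Rmult_le_compat_l; auto.
      + unfold Rdiv. rewrite Rpow_mult_distr, pow_inv. field. split; lra.
  - apply (ex_series_scal_l (V:=R_NormedModule)). apply (Hex (u / lam)).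
Qed.

End SS.

Lemma mono_deriv : forall (W dW : R -> R) a b, a <= b ->
  (forall x, a <= x <= b -> is_derive W x (dW x)) ->
  (forall x, a <= x <= b -> 0 <= dW x) -> W a <= W b.
Proof.
  intros W dW a b Hab Hd Hpos.
  destruct (MVT_gen W a b dW) as [c [Hc E]].
  - intros x Hx. rewrite Rmin_left, Rmax_right in Hx by lra. apply Hd. lra.
  - intros x Hx. rewrite Rmin_left, Rmax_right in Hx by lra.
    apply continuity_pt_filterlim. apply (ex_derive_continuous (K:=R_AbsRing) (V:=R_NormedModule)).
    eexists. apply Hd. lra.
  - rewrite Rmin_left, Rmax_right in Hc by lra.
    assert (0 <= dW c * (b - a)) by (apply Rmult_le_pos; [apply Hpos; lra|lra]). lra.
Qed.

Lemma near0 : forall (P : R -> R), continuous P 0 -> 0 <= P 0 ->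
  forall eps, 0 < eps -> exists d, 0 < d /\ forall v, 0 < v < d -> - eps < P v.
Proof.
  intros P HP H0 eps Heps.
  destruct (proj1 (filterlim_locally P (P 0)) HP (mkposreal eps Heps)) as [d Hd].
  exists d. split; [apply cond_pos|]. intros v Hv.
  assert (Hb : ball 0 d v).
  { change (Rabs (v - 0) < d). rewrite Rminus_0_r, Rabs_pos_eq; lra. }
  specialize (Hd v Hb). change (Rabs (P v - P 0) < eps) in Hd.
  apply Rabs_def2 in Hd. lra.
Qed.

Lemma pos_from_W : forall nu (P dW : R -> R), 0 <= nu ->
  continuous P 0 -> 0 <= P 0 ->
  (forall x, 0 < x -> is_derive (fun v => Rpower v nu * P v) x (dW x)) ->
  (forall x, 0 < x -> 0 <= dW x) ->
  forall u, 0 < u -> 0 <= P u.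
Proof.
  intros nu P dW Hnu HP H0 Hd Hpos u Hu.
  assert (HW : 0 <= Rpower u nu * P u).
  { apply Rnot_lt_le. intros Hlt.
    remember (- (Rpower u nu * P u)) as eps eqn:Heps.
    destruct (near0 P HP H0 eps) as [d [Hd0 Hdd]]; [lra|].
    remember (Rmin (d/2) (Rmin (u/2) (1/2))) as v eqn:Hv.
    assert (Hv1 : 0 < v) by (subst v; apply Rmin_pos; [lra|apply Rmin_pos; lra]).
    assert (Hv2 : v <= d/2) by (subst v; apply Rmin_l).
    assert (Hv3 : v <= u/2) by (generalize (Rmin_r (d/2) (Rmin (u/2) (1/2))) (Rmin_l (u/2) (1/2)); subst v; lra).
    assert (Hv4 : v <= 1/2) by (generalize (Rmin_r (d/2) (Rmin (u/2) (1/2))) (Rmin_r (u/2) (1/2)); subst v; lra).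
    assert (HPv : - eps < P v) by (apply Hdd; lra).
    assert (HWv : - eps < Rpower v nu * P v).
    { assert (Hr1 : 0 < Rpower v nu) by apply Rpower_pos.
      assert (Hr2 : Rpower v nu <= 1) by (apply Rpower_le1; lra).
      destruct (Rle_or_lt 0 (P v)).
      - assert (0 <= Rpower v nu * P v) by (apply Rmult_le_pos; lra). lra.
      - assert (P v <= Rpower v nu * P v).
        { assert ((1 - Rpower v nu) * P v <= 0) by (apply Rmult_le_0_l; lra). nra. }
        lra. }
    assert (Hm : Rpower v nu * P v <= Rpower u nu * P u).
    { apply (mono_deriv (fun w => Rpower w nu * P w) dW v u); [lra| |].
      - intros x Hx. apply Hd. lra.
      - intros x Hx. apply Hpos. lra. }
    lra. }
  assert (0 < Rpower u nu) by apply Rpower_pos.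
  destruct (Rle_or_lt 0 (P u)); auto.
  assert (Rpower u nu * P u < 0) by (apply Rmult_pos_neg; auto). lra.
Qed.

Lemma Rpow_split : forall x a, 0 < x -> Rpower x a = x * Rpower x (a - 1).
Proof.
  intros x a Hx. rewrite <- (Rpower_1 x) at 2 by auto. rewrite <- Rpower_plus. f_equal. ring.
Qed.

Section Sign.
Variable nu : R.
Hypothesis Hnu : 0 <= nu.

Lemma DF : forall u, Derive (fun x => S0 nu x) u = S1 nu u.
Proof. intros. apply is_derive_unique. apply dS0; auto. Qed.
Lemma DG : forall u, Derive (fun x => S1 nu x) u = S2 nu u.
Proof. intros. apply is_derive_unique. apply dS1; auto. Qed.
Lemma exF : forall u, ex_derive (fun x => S0 nu x) u.
Proof. intros. eexists. apply dS0; auto. Qed.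
Lemma exG : forall u, ex_derive (fun x => S1 nu x) u.
Proof. intros. eexists. apply dS1; auto. Qed.

Definition P1 u := u * S0 nu u ^ 2 - u ^ 2 * S1 nu u ^ 2 - nu * u * S0 nu u * S1 nu u.
Definition P1' u := let F := S0 nu u in let G := S1 nu u in let H := S2 nu u in
  F ^ 2 + 2 * u * F * G - 2 * u * G ^ 2 - 2 * u ^ 2 * G * H - nu * F * G - nu * u * G ^ 2 - nu * u * F * H.

Lemma dP1 : forall u, is_derive P1 u (P1' u).
Proof.
  intros u. unfold P1. auto_derive.
  - repeat split; try apply exF; try apply exG.
  - rewrite !DF, !DG. unfold P1'. simpl. rring.
Qed.

Definition P2 u := (u * S1 nu u + S0 nu u) * (u * S1 nu u + nu * S0 nu u) - u * S0 nu u ^ 2.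
Definition P2' u := let F := S0 nu u in let G := S1 nu u in let H := S2 nu u in
  (2 * G + u * H) * (u * G + nu * F) + (u * G + F) * (G + u * H + nu * G) - F ^ 2 - 2 * u * F * G.

Lemma dP2 : forall u, is_derive P2 u (P2' u).
Proof.
  intros u. unfold P2. auto_derive.
  - repeat split; try apply exF; try apply exG.
  - rewrite !DF, !DG. unfold P2'. simpl. rring.
Qed.

Definition P3 u := (u * S1 nu u + S0 nu u / 2) * (u * S1 nu u + nu * S0 nu u) - u * S0 nu u ^ 2.
Definition P3' u := let F := S0 nu u in let G := S1 nu u in let H := S2 nu u in
  (G + u * H + G / 2) * (u * G + nu * F) + (u * G + F / 2) * (G + u * H + nu * G) - F ^ 2 - 2 * u * F * G.

Lemma dP3 : forall u, is_derive P3 u (P3' u).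
Proof.
  intros u. unfold P3. auto_derive.
  - repeat split; try apply exF; try apply exG.
  - rewrite !DF, !DG. unfold P3'. simpl. rfield.
Qed.

Lemma EH : forall x, 0 < x -> S2 nu x = (S0 nu x - (nu + 1) * S1 nu x) / x.
Proof. intros x Hx. rewrite <- (S_ode nu Hnu x). field. lra. Qed.

Lemma contP : forall (P P' : R -> R), (forall u, is_derive P u (P' u)) -> continuous P 0.
Proof. intros P P' HP. apply (ex_derive_continuous (K:=R_AbsRing) (V:=R_NormedModule)). eexists; apply HP. Qed.

Lemma dW : forall (P P' : R -> R) a x, 0 < x -> (forall u, is_derive P u (P' u)) ->
  is_derive (fun v => Rpower v a * P v) x (a * Rpower x (a - 1) * P x + Rpower x a * P' x).
Proof. intros P P' a x Hx HP. apply (dmul (fun v => Rpower v a) P x (a * Rpower x (a-1)) (P' x)); auto. apply Rpower_derive; auto. Qed.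

Lemma P1_nonneg : forall u, 0 <= u -> 0 <= P1 u.
Proof.
  intros u Hu. destruct (Req_dec u 0) as [->|Hu0].
  - unfold P1. right. ring.
  - apply (pos_from_W nu P1 (fun x => nu * Rpower x (nu - 1) * P1 x + Rpower x nu * P1' x)); auto; try lra.
    + apply (contP P1 P1'). apply dP1.
    + unfold P1. right; ring.
    + intros x Hx. apply dW; auto. apply dP1.
    + intros x Hx. rewrite (Rpow_split x nu) by auto. unfold P1, P1'. simpl. rewrite (EH x Hx).
      assert (0 < Rpower x (nu - 1)) by apply Rpower_pos.
      match goal with |- 0 <= ?e => replace e with (Rpower x (nu - 1) * (x * S0 nu x ^ 2)) by (field; lra) end.
      apply Rmult_le_pos; [lra|]. apply Rmult_le_pos; [lra|apply pow2_ge_0].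
Qed.

Lemma P2_nonneg : forall u, 0 <= u -> 0 <= P2 u.
Proof.
  intros u Hu. destruct (Req_dec u 0) as [->|Hu0].
  - unfold P2. rewrite !Rmult_0_l, !Rplus_0_l. assert (H := S0_pos nu Hnu 0 (Rle_refl 0)). nra.
  - apply (pos_from_W nu P2 (fun x => nu * Rpower x (nu - 1) * P2 x + Rpower x nu * P2' x)); auto; try lra.
    + apply (contP P2 P2'). apply dP2.
    + unfold P2. rewrite !Rmult_0_l, !Rplus_0_l. assert (H := S0_pos nu Hnu 0 (Rle_refl 0)). nra.
    + intros x Hx. apply dW; auto. apply dP2.
    + intros x Hx. rewrite (Rpow_split x nu) by auto. unfold P2, P2'. simpl. rewrite (EH x Hx).
      assert (0 < Rpower x (nu - 1)) by apply Rpower_pos.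
      match goal with |- 0 <= ?e => replace e with (Rpower x (nu - 1) * (x * S1 nu x + nu * S0 nu x) ^ 2) by (field; lra) end.
      apply Rmult_le_pos; [lra|apply pow2_ge_0].
Qed.

Lemma DP3 : forall u, Derive (fun x : R => P3 x) u = P3' u.
Proof. intros. apply is_derive_unique. apply dP3. Qed.

Lemma P3_nonneg : 1/2 <= nu -> forall u, 0 <= u -> 0 <= P3 u.
Proof.
  intros Hnu2 u Hu.
  assert (HF0 := S0_pos nu Hnu 0 (Rle_refl 0)).
  assert (HP30 : P3 0 = nu * S0 nu 0 ^ 2 / 2) by (unfold P3; field).
  assert (HP30' : 0 <= P3 0).
  { rewrite HP30. assert (0 <= S0 nu 0 ^ 2) by apply pow2_ge_0.
    assert (0 <= nu * S0 nu 0 ^ 2) by (apply Rmult_le_pos; lra). lra. }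
  destruct (Req_dec u 0) as [->|Hu0]; auto.
  apply (pos_from_W (nu - 1/2) P3 (fun x => (nu - 1/2) * Rpower x (nu - 1/2 - 1) * P3 x + Rpower x (nu - 1/2) * P3' x)); auto; try lra.
  + apply (contP P3 P3'). apply dP3.
  + intros x Hx. apply dW; auto. apply dP3.
  + intros x Hx. assert (HFx := S0_pos nu Hnu x (Rlt_le _ _ Hx)).
    assert (HGx := S1_nonneg nu Hnu x (Rlt_le _ _ Hx)).
    rewrite (Rpow_split x (nu - 1/2)) by auto. unfold P3, P3'. simpl. rewrite (EH x Hx).
    assert (0 < Rpower x (nu - 1/2 - 1)) by apply Rpower_pos.
    match goal with |- 0 <= ?e => replace e with
      (Rpower x (nu - 1/2 - 1) * (S0 nu x * (x * S1 nu x + nu * S0 nu x) * (nu - 1/2) / 2)) by (field; lra) end.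
    apply Rmult_le_pos; [lra|]. apply Rmult_le_pos; [|lra]. apply Rmult_le_pos; [|lra].
    apply Rmult_le_pos; [lra|]. assert (0 <= x * S1 nu x) by (apply Rmult_le_pos; lra). nra.
Qed.

End Sign.

Lemma alg1 : forall x y nu F M, 0 <= x -> 0 < y -> 0 <= nu -> 0 < F -> 0 <= M ->
  x * y * F ^ 2 - M ^ 2 - nu * M * F >= 0 -> y > x + nu -> y * F - nu * F - M > 0.
Proof.
  intros x y nu F M Hx Hy Hnu HF HM HP Hlt.
  destruct (Rlt_or_le 0 (y * F - nu * F - M)) as [h|h]; [lra|exfalso].
  assert (HM2 : (y - nu) * F <= M) by lra.
  assert (Hyn : 0 < (y - nu) * F) by (apply Rmult_lt_0_compat; lra).
  assert (((y - nu) * F) ^ 2 <= M ^ 2) by (apply pow_incr; lra).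
  assert (nu * ((y - nu) * F) * F <= nu * M * F).
  { apply Rmult_le_compat_r; [lra|]. apply Rmult_le_compat_l; lra. }
  assert (x * y * F ^ 2 < (y - nu) * y * F ^ 2).
  { apply Rmult_lt_compat_r; [apply pow_lt; lra|]. apply Rmult_lt_compat_r; lra. }
  assert (((y - nu) * F) ^ 2 + nu * ((y - nu) * F) * F = (y - nu) * y * F ^ 2) by ring.
  lra.
Qed.

Lemma alg2 : forall x y nu c F M, 0 <= x -> 0 < y -> 0 <= nu -> 0 < F -> 0 <= M -> 0 <= c ->
  (M + c * F) * (M + nu * F) - x * y * F ^ 2 >= 0 -> y < x + nu - c -> y * F - nu * F - M < 0.
Proof.
  intros x y nu c F M Hx Hy Hnu HF HM Hc HP Hlt.
  destruct (Rlt_or_le (y * F - nu * F - M) 0) as [h|h]; [lra|exfalso].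
  assert (HM2 : M <= (y - nu) * F) by lra.
  assert (Hyn : 0 <= y - nu).
  { destruct (Rle_or_lt 0 (y - nu)); auto. assert ((y - nu) * F < 0) by (apply Rmult_neg_pos; lra). lra. }
  assert ((M + c * F) * (M + nu * F) <= ((y - nu) * F + c * F) * ((y - nu) * F + nu * F)).
  { apply Rmult_le_compat; try lra.
    - assert (0 <= c * F) by (apply Rmult_le_pos; lra). lra.
    - assert (0 <= nu * F) by (apply Rmult_le_pos; lra). lra. }
  assert (((y - nu) * F + c * F) * ((y - nu) * F + nu * F) = (y - nu + c) * y * F ^ 2) by ring.
  assert ((y - nu + c) * y * F ^ 2 < x * y * F ^ 2).
  { apply Rmult_lt_compat_r; [apply pow_lt; lra|]. apply Rmult_lt_compat_r; lra. }
  lra.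
Qed.

Section Hsec.
Variable nu x : R.
Hypothesis Hnu : 0 <= nu.
Hypothesis Hx : 0 <= x.

Definition hh (t : R) : R := Rpower t nu * exp (- t) * S0 nu (x * t).
Definition dhh (t : R) : R :=
  nu * Rpower t (nu - 1) * exp (- t) * S0 nu (x * t) + Rpower t nu * (- exp (- t)) * S0 nu (x * t)
  + Rpower t nu * exp (- t) * (x * S1 nu (x * t)).

Lemma dS0x : forall t, is_derive (fun s => S0 nu (x * s)) t (x * S1 nu (x * t)).
Proof.
  intros t. apply (is_derive_comp (S0 nu) (fun s => x * s) t (S1 nu (x * t)) x).
  - apply dS0; auto.
  - auto_derive; auto; rring.
Qed.

Lemma dhh_ok : forall t, 0 < t -> is_derive hh t (dhh t).
Proof.
  intros t Ht. unfold hh, dhh.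
  apply (dext _ _ ((nu * Rpower t (nu - 1) * exp (- t) + Rpower t nu * (- exp (- t))) * S0 nu (x * t)
                   + (Rpower t nu * exp (- t)) * (x * S1 nu (x * t)))); [|rring].
  apply (dmul (fun s => Rpower s nu * exp (- s)) (fun s => S0 nu (x * s))).
  - apply (dmul (fun s => Rpower s nu) (fun s => exp (- s))).
    + apply Rpower_derive; auto.
    + apply dexpm.
  - apply dS0x.
Qed.

Lemma hh_cont : forall t, 0 < t -> continuous hh t.
Proof. intros t Ht. apply (ex_derive_continuous (K:=R_AbsRing) (V:=R_NormedModule)). eexists. apply dhh_ok; auto. Qed.

Lemma hh_exRInt : forall a b, 0 < a -> 0 < b -> ex_RInt hh a b.
Proof.
  intros a b Ha Hb. apply (ex_RInt_continuous (V:=R_CompleteNormedModule)). intros z Hz.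
  apply hh_cont. assert (0 < Rmin a b) by (apply Rmin_pos; auto). lra.
Qed.

Lemma hh_bound : exists C, 0 < C /\ forall t, 0 < t -> 0 <= hh t <= C * exp (- (1/2) * t).
Proof.
  destruct (Rpower_exp_bound nu (1/4) Hnu) as [C1 [HC1 HB1]]; [lra|].
  destruct (S0_bound nu Hnu (4 * x + 1)) as [M [HM HBM]]; [lra|].
  exists (C1 * M). split; [apply Rmult_lt_0_compat; auto|]. intros t Ht.
  assert (Hxt : 0 <= x * t) by (apply Rmult_le_pos; lra).
  assert (HS := S0_pos nu Hnu (x * t) Hxt).
  unfold hh. split.
  - apply Rmult_le_pos; [apply Rmult_le_pos; left; [apply Rpower_pos|apply exp_pos]|lra].
  - assert (H1 := HB1 t Ht). assert (H2 := HBM (x * t) Hxt).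
    assert (H3 : exp (x * t / (4 * x + 1)) <= exp (1/4 * t)).
    { apply exp_mono. apply Rmult_le_reg_r with (4 * x + 1); [lra|].
      unfold Rdiv. rewrite Rmult_assoc, Rinv_l by lra. nra. }
    assert (Hp : 0 < Rpower t nu) by apply Rpower_pos.
    assert (He : 0 < exp (- t)) by apply exp_pos.
    apply Rle_trans with (C1 * exp (1/4 * t) * exp (- t) * (M * exp (1/4 * t))).
    + apply Rmult_le_compat.
      * apply Rmult_le_pos; lra.
      * lra.
      * apply Rmult_le_compat_r; lra.
      * apply Rle_trans with (1 := H2). apply Rmult_le_compat_l; lra.
    + right. replace (C1 * exp (1 / 4 * t) * exp (- t) * (M * exp (1 / 4 * t))) with
        (C1 * M * (exp (1 / 4 * t) * exp (- t) * exp (1 / 4 * t))) by ring.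
      rewrite <- !exp_plus. do 2 f_equal. lra.
Qed.

Definition JJ (s : R) : R := RInt_gen hh (at_point s) (Rbar_locally p_infty).

Lemma JJ_ok : forall s, 0 < s -> is_RInt_gen hh (at_point s) (Rbar_locally p_infty) (JJ s).
Proof.
  intros s Hs. destruct hh_bound as [C [HC HB]].
  destruct (RInt_gen_exists hh s C (1/2)) as [l [_ [Hl _]]]; try lra.
  - intros b Hb. apply hh_exRInt; lra.
  - intros t Ht. apply HB. lra.
  - unfold JJ. rewrite (is_RInt_gen_unique _ _ Hl). exact Hl.
Qed.

Lemma JJ_chasles : forall s, 0 < s -> JJ s = RInt hh s 1 + JJ 1.
Proof.
  intros s Hs. apply is_RInt_gen_unique.
  apply (is_RInt_gen_Chasles hh 1 (RInt hh s 1) (JJ 1)).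
  - apply is_RInt_gen_at_point. apply (RInt_correct (V:=R_CompleteNormedModule)). apply hh_exRInt; lra.
  - apply JJ_ok; lra.
Qed.

Lemma JJ_derive : forall t, 0 < t -> is_derive JJ t (- hh t).
Proof.
  intros t Ht.
  apply (is_derive_ext_loc (fun s => RInt hh s 1 + JJ 1)).
  - apply locally_interval with 0 p_infty; simpl; auto.
    intros y Hy _. symmetry. apply JJ_chasles; auto.
  - apply (dext _ _ (- hh t + 0)); [|rring].
    apply (is_derive_plus (K:=R_AbsRing) (V:=R_NormedModule)); [|apply (is_derive_const (K:=R_AbsRing) (V:=R_NormedModule))].
    apply (is_derive_RInt' hh (fun s => RInt hh s 1) t 1).
    + apply locally_interval with 0 p_infty; simpl; auto.
      intros y Hy _. apply (RInt_correct (V:=R_CompleteNormedModule)). apply hh_exRInt; lra.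
    + apply hh_cont; auto.
Qed.

End Hsec.

Lemma bessel_eq : forall nu u, 0 < u ->
  besselI nu (2 * sqrt u) = Rpower (sqrt u) nu * S0 nu u.
Proof.
  intros nu u Hu. unfold besselI, S0, PSeries.
  transitivity (Series (fun k => cf nu k * u ^ k * Rpower (sqrt u) nu)).
  2: { rewrite Series_scal_r. ring. }
  apply Series_ext. intros k.
  replace (2 * sqrt u / 2) with (sqrt u) by field.
  rewrite pow_mult, pow2_sqrt by lra. unfold cf. unfold Rdiv. ring.
Qed.

Lemma orig_eq : forall mu x t, 0 < x -> 0 < t ->
  Rpower t ((mu - 1) / 2) * exp (- t - x) * besselI (mu - 1) (2 * sqrt (x * t))
  = Rpower x ((mu - 1) / 2) * exp (- x) * hh (mu - 1) x t.
Proof.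
  intros mu x t Hx Ht. rewrite bessel_eq by (apply Rmult_lt_0_compat; auto).
  unfold hh.
  rewrite <- Rpower_sqrt by (apply Rmult_lt_0_compat; auto).
  rewrite Rpower_mult. rewrite <- Rpower_mult_distr by auto.
  replace (/ 2 * (mu - 1)) with ((mu - 1) / 2) by field.
  replace (Rpower t (mu - 1)) with (Rpower t ((mu - 1) / 2) * Rpower t ((mu - 1) / 2))
    by (rewrite <- Rpower_plus; f_equal; field).
  replace (- t - x) with (- t + - x) by ring. rewrite exp_plus. ring.
Qed.

Lemma scalR : forall a b : R, scal a b = a * b.
Proof. reflexivity. Qed.

Lemma marcum_eq : forall mu x s, 1 <= mu -> 0 <= x -> 0 < s ->
  marcumQ mu x s = exp (- x) * JJ (mu - 1) x s.
Proof.
  intros mu x s Hmu Hx Hs.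
  assert (Hnu : 0 <= mu - 1) by lra.
  assert (HJ := JJ_ok (mu - 1) x Hnu Hx s Hs).
  unfold marcumQ. destruct (Req_EM_T x 0) as [Hx0|Hx0].
  - subst x. rewrite Ropp_0, exp_0, Rmult_1_l.
    set (c0 := cf (mu - 1) 0).
    assert (Hc0 : c0 = / Gamma mu).
    { unfold c0, cf. change (INR (fact 0)) with 1. change (INR 0) with 0.
      replace (0 + (mu - 1) + 1) with mu by ring. rewrite Rmult_1_l. reflexivity. }
    assert (HG := Gamma_pos mu Hmu).
    assert (Hug : is_RInt_gen (fun t => Rpower t (mu - 1) * exp (- t)) (at_point s) (Rbar_locally p_infty)
                   (scal (/ c0) (JJ (mu - 1) 0 s))).
    { apply (is_RInt_gen_ext (fun y => scal (/ c0) (hh (mu - 1) 0 y))).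
      - exists (fun _ => True) (fun _ => True); try easy. exists 0; auto.
        intros a b _ _ t _. unfold hh. rewrite Rmult_0_l. unfold S0. rewrite PSeries_0.
        fold c0. rewrite scalR, Hc0. rfield. lra.
      - refine (is_RInt_gen_scal _ _ _ HJ). }
    unfold upper_Gamma. rewrite (is_RInt_gen_unique _ _ Hug).
    rewrite scalR, Hc0. field. lra.
  - assert (Hxp : 0 < x) by lra.
    assert (Hor : is_RInt_gen (fun t => Rpower t ((mu - 1) / 2) * exp (- t - x)
                       * besselI (mu - 1) (2 * sqrt (x * t))) (at_point s) (Rbar_locally p_infty)
                   (scal (Rpower x ((mu - 1) / 2) * exp (- x)) (JJ (mu - 1) x s))).
    { apply (is_RInt_gen_ext (fun y => scal (Rpower x ((mu - 1) / 2) * exp (- x)) (hh (mu - 1) x y))).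
      - exists (fun a => a = s) (fun b => s < b); try easy. exists s; auto.
        intros a b -> Hb t Ht. simpl in Ht. rewrite Rmin_left in Ht by lra.
        rewrite orig_eq by lra. rewrite scalR. rring.
      - refine (is_RInt_gen_scal _ _ _ HJ). }
    rewrite (is_RInt_gen_unique _ _ Hor). match goal with |- context [scal ?a ?b] => change (scal a b) with (a * b) end.
    replace (Rpower x ((1 - mu) / 2)) with (/ Rpower x ((mu - 1) / 2)).
    + assert (0 < Rpower x ((mu - 1) / 2)) by apply Rpower_pos. field. lra.
    + rewrite <- Rpower_Ropp. f_equal. field.
Qed.

Lemma dQ : forall mu x t, 1 <= mu -> 0 <= x -> 0 < t ->
  is_derive (fun s => marcumQ mu x s) t (- exp (- x) * hh (mu - 1) x t).
Proof.
  intros mu x t Hmu Hx Ht.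
  apply (is_derive_ext_loc (fun s => exp (- x) * JJ (mu - 1) x s)).
  - apply locally_interval with 0 p_infty; simpl; auto.
    intros y Hy _. symmetry. apply marcum_eq; auto.
  - apply (dext _ _ (exp (- x) * (- hh (mu - 1) x t))); [|rring].
    apply is_derive_scal. apply JJ_derive; auto; lra.
Qed.

Theorem theorem2 (mu x y : R) (hmu : 1 <= mu) (hx : 0 <= x) (hy : 0 < y) :
  (y > x + mu - 1 -> exists d2, d2Q_dy2 mu x y d2 /\ d2 > 0) /\
  (y < x + mu - 2 -> exists d2, d2Q_dy2 mu x y d2 /\ d2 < 0) /\
  (3 / 2 <= mu -> y < x + mu - 3 / 2 -> exists d2, d2Q_dy2 mu x y d2 /\ d2 < 0).
Proof.
  assert (Hnu : 0 <= mu - 1) by lra.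
  remember (mu - 1) as nu eqn:Hnueq.
  assert (HD : d2Q_dy2 mu x y (- exp (- x) * dhh nu x y)).
  { exists (fun t => - exp (- x) * hh nu x t). split.
    - intros t Ht. subst nu. apply dQ; auto.
    - apply is_derive_scal. apply dhh_ok; auto. }
  assert (Hxy : 0 <= x * y) by (apply Rmult_le_pos; lra).
  assert (HF : 0 < S0 nu (x * y)) by (apply S0_pos; auto).
  assert (HG : 0 <= S1 nu (x * y)) by (apply S1_nonneg; auto).
  assert (HP1 := P1_nonneg nu Hnu (x * y) Hxy). unfold P1 in HP1.
  assert (HP2 := P2_nonneg nu Hnu (x * y) Hxy). unfold P2 in HP2.
  assert (HP3 : 1/2 <= nu -> 0 <= P3 nu (x * y)) by (intros h; apply P3_nonneg; auto).
  unfold P3 in HP3.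
  assert (Hd2 : - exp (- x) * dhh nu x y = exp (- x) * exp (- y) * Rpower y (nu - 1) *
            (y * S0 nu (x * y) - nu * S0 nu (x * y) - x * y * S1 nu (x * y))).
  { unfold dhh. rewrite (Rpow_split y nu) by auto. ring. }
  assert (Hpos : 0 < exp (- x) * exp (- y) * Rpower y (nu - 1)).
  { apply Rmult_lt_0_compat; [apply Rmult_lt_0_compat; apply exp_pos|apply Rpower_pos]. }
  revert HD Hd2. generalize (- exp (- x) * dhh nu x y). intros d2 HD Hd2.
  remember (S0 nu (x * y)) as F eqn:HFe. remember (S1 nu (x * y)) as G eqn:HGe.
  assert (HM : 0 <= x * y * G) by (apply Rmult_le_pos; auto).
  split; [|split].
  - intros Hlt. exists d2. split; auto. rewrite Hd2.
    assert (K : y * F - nu * F - x * y * G > 0).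
    { apply (alg1 x y nu F (x * y * G)); auto; try lra.
}
    apply Rmult_gt_0_compat; lra.
  - intros Hlt. exists d2. split; auto. rewrite Hd2.
    assert (K : y * F - nu * F - x * y * G < 0).
    { apply (alg2 x y nu 1 F (x * y * G)); auto; try lra.
}
    assert (0 < - (y * F - nu * F - x * y * G)) by lra.
    assert (0 < exp (- x) * exp (- y) * Rpower y (nu - 1) * - (y * F - nu * F - x * y * G)) by (apply Rmult_lt_0_compat; lra).
    lra.
  - intros Hmu2 Hlt. exists d2. split; auto. rewrite Hd2.
    assert (K : y * F - nu * F - x * y * G < 0).
    { specialize (HP3 ltac:(lra)). apply (alg2 x y nu (1/2) F (x * y * G)); auto; try lra.
}
    assert (0 < - (y * F - nu * F - x * y * G)) by lra.
    assert (0 < exp (- x) * exp (- y) * Rpower y (nu - 1) * - (y * F - nu * F - x * y * G)) by (apply Rmult_lt_0_compat; lra).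
    lra.
Qed.
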